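(* Let $X$ be a nonempty set and let $k,k'$ be real-valued positive-definite kernel functions on $X$, with $k$ injective. Then: (1) if $\theta_1>0$ and $\theta_2\ge0$, then $\theta_1k+\theta_2k'$ is injective; (2) if $p\ge1$ is an odd integer, then $k^p$ is injective; (3) if $k$ takes only nonnegative values, then $k^p$ is injective for every integer $p\ge1$. Consequently, if $k$ is nonnegative-valued and $\psi:k(X\times X)\to\mathbb{R}$ is given by a convergent power series $\psi(t)=\sum_{n=0}^\infty a_nt^n$ with every $a_n\ge0$ and $a_n>0$ for some $n\ge1$, then $\psi\circ k$ is injective.
   Context: A function $k:X\times X\to\mathbb{R}$ is a positive-definite kernel if $\sum_{i,j=1}^ma_ia_jk(x_i,x_j)\ge0$ for all finite families $x_1,\dots,x_m\in X$, $a_1,\dots,a_m\in\mathbb{R}$. A positive-definite kernel $k$ is called injective if $k(x,x)-2k(x,y)+k(y,y)>0$ for all distinct $x,y\in X$ (equivalently, the feature map of its reproducing kernel Hilbert space is injective). Powers $k^p$ are taken pointwise. *)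

(* Defs.v *)
From HB Require Import structures.
From mathcomp Require Import all_boot all_order all_algebra.
From mathcomp Require Import all_classical all_reals all_analysis.
Set Implicit Arguments. Unset Strict Implicit. Unset Printing Implicit Defensive.
Import Order.TTheory GRing.Theory Num.Theory.
Import numFieldNormedType.Exports.
Local Open Scope ring_scope.

Definition pd_kernel (R : realType) (X : Type) (k : X -> X -> R) : Prop :=
  (forall x y, k x y = k y x) /\
  (forall (m : nat) (x : 'I_m -> X) (a : 'I_m -> R),
      0 <= \sum_(i < m) \sum_(j < m) a i * a j * k (x i) (x j)).

Definition injective_kernel (R : realType) (X : Type) (k : X -> X -> R) : Prop :=
  forall x y : X, x <> y -> 0 < k x x - 2 * k x y + k y y.

Definition kpow (R : realType) (X : Type) (k : X -> X -> R) (p : nat) : X -> X -> R :=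
  fun x y => k x y ^+ p.

Definition power_series (R : realType) (a : nat -> R) (t : R) : R :=
  limn (series (fun n => a n * t ^+ n)).

(* Main.v *)
Require Import Defs.
From HB Require Import structures.
From mathcomp Require Import all_boot all_order all_algebra.
From mathcomp Require Import all_classical all_reals all_analysis.
From mathcomp Require Import lra.
Import Order.TTheory GRing.Theory Num.Theory.
Import numFieldNormedType.Exports.
Local Open Scope ring_scope.

Lemma core (R : realType) (a b c : R) (p : nat) : (0 < p)%N ->
  0 <= a -> 0 <= b -> 0 <= c -> c ^+ 2 <= a * b -> 2 * c < a + b ->
  2 * c ^+ p < a ^+ p + b ^+ p.
Proof.
move=> p0 a0 b0 c0 cab cl.
have A0 : 0 <= a ^+ p by exact: exprn_ge0.
have B0 : 0 <= b ^+ p by exact: exprn_ge0.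
have C0 : 0 <= c ^+ p by exact: exprn_ge0.
have CAB : (c ^+ p) ^+ 2 <= a ^+ p * b ^+ p.
  rewrite -exprM mulnC exprM -exprMn; apply: lerXn2r => //; rewrite ?qualifE /=.
    by rewrite exprn_ge0.
  by rewrite mulr_ge0.
rewrite ltNge; apply/negP => H.
have [HA HB] : a ^+ p <= c ^+ p /\ b ^+ p <= c ^+ p.
  move: A0 B0 C0 CAB H; set A := a ^+ p; set B := b ^+ p; set C := c ^+ p => *.
  split; nra.
have ac : a <= c.
  rewrite leNgt; apply/negP => ca.
  by move: HA; rewrite leNgt (ltrXn2r p c0 ca) -lt0n p0.
have bc : b <= c.
  rewrite leNgt; apply/negP => ca.
  by move: HB; rewrite leNgt (ltrXn2r p c0 ca) -lt0n p0.
lra.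
Qed.
Arguments core {R a b c p}.
Lemma quad (R : realType) (X : Type) (k : X -> X -> R) x y t s :
  pd_kernel k -> 0 <= t * t * k x x + 2 * t * s * k x y + s * s * k y y.
Proof.
case=> sym pd.
have := pd 2%N (fun i : 'I_2 => if val i == 0%N then x else y)
               (fun i : 'I_2 => if val i == 0%N then t else s).
rewrite !big_ord_recr !big_ord0 /= (sym y x).
lra.
Qed.
Lemma pd_facts (R : realType) (X : Type) (k : X -> X -> R) x y :
  pd_kernel k -> [/\ 0 <= k x x, 0 <= k y y, 0 <= k x x - 2 * k x y + k y y
   & k x y ^+ 2 <= k x x * k y y].
Proof.
move=> pk.
have q := fun t s => @quad _ _ k x y t s pk.
have ha := q 1 0; have hb := q 0 1; have hd := q 1 (-1).
have hp := q 1 1.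
split; [lra|lra|lra|].
set a := k x x in ha hb hd hp q *; set b := k y y in ha hb hd hp q *; set c := k x y in ha hb hd hp q *.
have h1 := q c (- a); have h2 := q b (- c).
have [a0|a0] := ltrP 0 a.
  have : a * (a * b - c ^+ 2) >= 0 by nra.
  rewrite pmulr_rge0 //; lra.
have [b0|b0] := ltrP 0 b.
  have : b * (a * b - c ^+ 2) >= 0 by nra.
  rewrite pmulr_rge0 //; lra.
have -> : c = 0 by lra.
have -> : a = 0 by lra.
rewrite expr2; lra.
Qed.

Theorem lemma2 (R : realType) (X : Type) (k k' : X -> X -> R) :
  (exists x : X, True) ->
  pd_kernel k -> pd_kernel k' -> injective_kernel k ->
  (forall theta1 theta2 : R, 0 < theta1 -> 0 <= theta2 ->
      injective_kernel (fun x y => theta1 * k x y + theta2 * k' x y)) /\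
  (forall p : nat, odd p -> injective_kernel (kpow k p)) /\
  ((forall x y, 0 <= k x y) ->
     (forall p : nat, (1 <= p)%N -> injective_kernel (kpow k p)) /\
     (forall a : nat -> R,
        (forall n, 0 <= a n) ->
        (exists n : nat, (1 <= n)%N /\ 0 < a n) ->
        (forall x y : X, cvgn (series (fun n => a n * k x y ^+ n))) ->
        injective_kernel (fun x y => power_series a (k x y)))).
Proof.
move=> _ pk pk' ik.
split.
  move=> t1 t2 t10 t20 x y xy.
  have [_ _ d' _] := @pd_facts _ _ k' x y pk'.
  have d := ik x y xy.
  have h1 : 0 < t1 * (k x x - 2 * k x y + k y y) by exact: mulr_gt0.
  have h2 : 0 <= t2 * (k' x x - 2 * k' x y + k' y y) by exact: mulr_ge0.
  lra.
split.
  move=> p op x y xy; rewrite /kpow.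
  have [a0 b0 _ cab] := @pd_facts _ _ k x y pk.
  have d := ik x y xy.
  have A0 : 0 <= k x x ^+ p by exact: exprn_ge0.
  have B0 : 0 <= k y y ^+ p by exact: exprn_ge0.
  have [c0|c0] := lerP 0 (k x y).
    have p0 : (0 < p)%N by move: op; case: (p).
    have := core p0 a0 b0 c0 cab ltac:(lra); lra.
  have : k x y ^+ p < 0 by rewrite exprn_odd_lt0.
  lra.
move=> kge0.
have kp : forall p : nat, (1 <= p)%N -> injective_kernel (kpow k p).
  move=> p p0 x y xy; rewrite /kpow.
  have [a0 b0 _ cab] := @pd_facts _ _ k x y pk.
  have d := ik x y xy.
  have := core p0 a0 b0 (kge0 x y) cab ltac:(lra); lra.
split => //.
move=> a a0 [n0 [n01 an0]] cv x y xy.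
rewrite /power_series.
set A := k x x; set B := k y y; set C := k x y.
pose w n := a n * (A ^+ n - 2 * C ^+ n + B ^+ n).
have w0 : forall n, 0 <= w n.
  case=> [|n]; first by rewrite /w !expr0; lra.
  apply: mulr_ge0 => //; apply/ltW; exact: kp.
have wn0 : 0 < w n0 by apply: mulr_gt0 => //; exact: kp.
pose S t := series (fun n => a n * t ^+ n).
have eq : series w = (fun n => S A n - 2 * S C n + S B n).
  apply/funext => n; rewrite /S /series /=.
  rewrite mulr_sumr -sumrN -!big_split /=; apply: eq_bigr => i _.
  rewrite /w; lra.
set L := _ - _ + _.
have cw : (series w @ \oo --> L)%classic.
  rewrite eq; apply: cvgD; [apply: cvgB|].
  - exact: cv.
  - apply: cvgM; [exact: cvg_cst| exact: cv].
  - exact: cv.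
have lw : limn (series w) = L by apply: cvg_lim.
have : series w n0.+1 <= L.
  rewrite -lw; apply: nondecreasing_cvgn_le.
    by apply: nondecreasing_series => *; exact: w0.
  by apply/cvg_ex; exists L.
rewrite /series /= big_nat_recr //=.
have : 0 <= \sum_(0 <= i < n0) w i by apply: sumr_ge0 => *; exact: w0.
lra.
Qed.
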